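(* Let $x_1,x_{-1}$ be continuous variables and $n\in\mathbb{Z}$ a discrete variable. For spectral parameters $k,k'\in\mathbb{C}$ set $$\rho_n(k)=\mathrm{e}^{kx_1+k^{-1}x_{-1}}k^n,\qquad \sigma_n(k')=\mathrm{e}^{k'x_1+k'^{-1}x_{-1}}(-k')^{-n},\qquad \Omega(k,k')=\frac{1}{k+k'}.$$ Let $\mathrm{d}\zeta(k,k')$ be an arbitrary integration measure and $D$ an arbitrary integration domain in the $(k,k')$-space. Let $\boldsymbol{u}_n(k)$ (an infinite column vector depending on $x_1,x_{-1},n$ and $k$) be any solution of the linear integral equation $$\boldsymbol{u}_n(k)+\iint_D\mathrm{d}\zeta(l,l')\,\rho_n(k)\Omega(k,l')\sigma_n(l')\,\boldsymbol{u}_n(l)=\rho_n(k)\boldsymbol{c}(k),$$ and define the infinite matrix $$\boldsymbol{U}_n=\iint_D\mathrm{d}\zeta(k,k')\,\boldsymbol{u}_n(k)\,{}^{t}\boldsymbol{c}(k')\,\sigma_n(k').$$ Then $\varphi_n:=\ln\bigl(1-\boldsymbol{U}_n^{(0,-1)}\bigr)$ is a solution of the two-dimensional Toda equation $$\partial_1\partial_{-1}\varphi_n=\mathrm{e}^{\varphi_n-\varphi_{n-1}}-\mathrm{e}^{\varphi_{n+1}-\varphi_n},$$ where $\partial_{\pm1}=\partial/\partial x_{\pm1}$. Moreover, the wave function $\phi_n:=[\boldsymbol{u}_n(k)]^{(0)}$ satisfies the linear problem $$\partial_1\phi_n=(\partial_1\varphi_n)\phi_n+\phi_{n+1},\qquad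 \partial_{-1}\phi_n=\mathrm{e}^{\varphi_n-\varphi_{n-1}}\phi_{n-1},\qquad n\in\mathbb{Z}.$$
   Context: Infinite vectors and matrices are indexed by $\mathbb{Z}$, with the usual (formal) rules of addition and multiplication; all infinite sums occurring are assumed convergent. $\boldsymbol{c}(k)={}^{t}(\cdots,k^{-1},1,k,\cdots)$ is the infinite column vector whose $i$-th component is $k^i$ ($i\in\mathbb{Z}$), and ${}^{t}\boldsymbol{c}(k')$ is the infinite row vector with $i$-th component $k'^i$; ${}^{t}(\cdot)$ denotes transpose. $\boldsymbol{u}\,{}^{t}\boldsymbol{v}$ denotes the infinite matrix with $(i,j)$-entry $u_iv_j$. For an infinite matrix $\boldsymbol{U}$, $\boldsymbol{U}^{(i,j)}$ denotes its $(i,j)$-entry, and $[\boldsymbol{u}]^{(i)}$ denotes the $i$-th component of an infinite vector. It is assumed that the homogeneous version of the linear integral equation (right-hand side zero) has only the zero solution. *)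

(* Defs.v *)
From mathcomp Require Import all_boot all_order all_algebra.
From mathcomp Require Import all_classical all_reals all_analysis.
From mathcomp Require Export complex.
Import GRing.Theory Num.Theory numFieldNormedType.Exports.

Set Implicit Arguments.
Unset Strict Implicit.
Unset Printing Implicit Defensive.

Local Open Scope ring_scope.
Local Open Scope complex_scope.

Section Toda.
Variable R : realType.

Definition cexp (z : R[i]) : R[i] :=
  Complex (expR (complex.Re z) * cos (complex.Im z))
          (expR (complex.Re z) * sin (complex.Im z)).

(* plane-wave factors and Cauchy kernel; x1, xm stand for x_1, x_{-1} *)
Definition rho (n : int) (x1 xm : R) (k : R[i]) : R[i] :=
  cexp (k * x1%:C + k^-1 * xm%:C) * k ^ n.
Definition sigma (n : int) (x1 xm : R) (k' : R[i]) : R[i] :=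
  cexp (k' * x1%:C + k'^-1 * xm%:C) * (- k') ^ (- n).
Definition Omega (k k' : R[i]) : R[i] := (k + k')^-1.

Definition cderivable (f : R -> R[i]) (x : R) : Prop :=
  derivable (fun y => complex.Re (f y)) x 1 /\
  derivable (fun y => complex.Im (f y)) x 1.
Definition cderive (f : R -> R[i]) (x : R) : R[i] :=
  Complex (derive1 (fun y : R => complex.Re (f y)) x) (derive1 (fun y : R => complex.Im (f y)) x).
Definition ccontinuous (f : R -> R[i]) : Prop :=
  continuous (fun y : R => complex.Re (f y)) /\ continuous (fun y : R => complex.Im (f y)).
Definition pd1 (F : R -> R -> R[i]) (x1 xm : R) : R[i] := cderive (fun y => F y xm) x1.
Definition pdm (F : R -> R -> R[i]) (x1 xm : R) : R[i] := cderive (fun y => F x1 y) xm.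

Definition cintegrable d (T : measurableType d) (mu : {measure set T -> \bar R})
  (D : set T) (f : T -> R[i]) : Prop :=
  mu.-integrable D (fun t => (complex.Re (f t))%:E) /\
  mu.-integrable D (fun t => (complex.Im (f t))%:E).
Definition cint d (T : measurableType d) (mu : {measure set T -> \bar R})
  (D : set T) (f : T -> R[i]) : R[i] :=
  Complex (Rintegral mu D (fun t => complex.Re (f t)))
          (Rintegral mu D (fun t => complex.Im (f t))).

(* The integration  \iint_D d zeta(l,l') F(l,l') : the points of the domain D
   are points t of an arbitrary measure space, with coordinates
   (l,l') = (K t, K' t), and the (complex) measure is d zeta = w d mu. *)
Definition zintegrable d (T : measurableType d) (mu : {measure set T -> \bar R})
  (D : set T) (w K K' : T -> R[i]) (F : R[i] -> R[i] -> R[i]) : Prop :=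
  cintegrable mu D (fun t => w t * F (K t) (K' t)).
Definition zint d (T : measurableType d) (mu : {measure set T -> \bar R})
  (D : set T) (w K K' : T -> R[i]) (F : R[i] -> R[i] -> R[i]) : R[i] :=
  cint mu D (fun t => w t * F (K t) (K' t)).

Definition diff_under1 d (T : measurableType d) (mu : {measure set T -> \bar R})
  (D : set T) (w K K' : T -> R[i]) (F : R -> R -> R[i] -> R[i] -> R[i]) : Prop :=
  forall x1 xm,
    (forall t, D t -> cderivable (fun y => F y xm (K t) (K' t)) x1) /\
    zintegrable mu D w K K' (fun l l' => pd1 (fun a b => F a b l l') x1 xm) /\
    cderivable (fun y => zint mu D w K K' (F y xm)) x1 /\
    pd1 (fun a b => zint mu D w K K' (F a b)) x1 xm =
      zint mu D w K K' (fun l l' => pd1 (fun a b => F a b l l') x1 xm).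
Definition diff_underm d (T : measurableType d) (mu : {measure set T -> \bar R})
  (D : set T) (w K K' : T -> R[i]) (F : R -> R -> R[i] -> R[i] -> R[i]) : Prop :=
  forall x1 xm,
    (forall t, D t -> cderivable (fun y => F x1 y (K t) (K' t)) xm) /\
    zintegrable mu D w K K' (fun l l' => pdm (fun a b => F a b l l') x1 xm) /\
    cderivable (fun y => zint mu D w K K' (F x1 y)) xm /\
    pdm (fun a b => zint mu D w K K' (F a b)) x1 xm =
      zint mu D w K K' (fun l l' => pdm (fun a b => F a b l l') x1 xm).

Definition admissible d (T : measurableType d) (D : set T) (K' : T -> R[i])
  (k : R[i]) : Prop :=
  k != 0 /\ forall t, D t -> k + K' t != 0.

(* integrand of the linear integral equation, for the i-th component *)
Definition eq_integrand (u : int -> R -> R -> R[i] -> int -> R[i])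
  (n : int) (k : R[i]) (i : int) (x1 xm : R) (l l' : R[i]) : R[i] :=
  rho n x1 xm k * Omega k l' * sigma n x1 xm l' * u n x1 xm l i.
Definition U_integrand (u : int -> R -> R -> R[i] -> int -> R[i])
  (n i j : int) (x1 xm : R) (l l' : R[i]) : R[i] :=
  u n x1 xm l i * l' ^ j * sigma n x1 xm l'.
Definition Umat d (T : measurableType d) (mu : {measure set T -> \bar R})
  (D : set T) (w K K' : T -> R[i]) (u : int -> R -> R -> R[i] -> int -> R[i])
  (n : int) (x1 xm : R) (i j : int) : R[i] :=
  zint mu D w K K' (U_integrand u n i j x1 xm).

End Toda.

(* Main.v *)
Require Import Defs.
From mathcomp Require Import all_boot all_order all_algebra.
From mathcomp Require Import all_classical all_reals all_analysis.
From mathcomp Require Import complex.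
From mathcomp Require Import ring lra.
Import GRing.Theory Num.Theory numFieldNormedType.Exports.
Local Open Scope ring_scope.
Local Open Scope complex_scope.
Set Implicit Arguments.
Unset Strict Implicit.
Unset Printing Implicit Defensive.


Section Calc.
Variable R : realType.
Notation C := R[i].

Lemma cReD (a b : C) : complex.Re (a + b) = complex.Re a + complex.Re b.
Proof. by case: a; case: b. Qed.
Lemma cImD (a b : C) : complex.Im (a + b) = complex.Im a + complex.Im b.
Proof. by case: a; case: b. Qed.
Lemma cReN (a : C) : complex.Re (- a) = - complex.Re a.
Proof. by case: a. Qed.
Lemma cImN (a : C) : complex.Im (- a) = - complex.Im a.
Proof. by case: a. Qed.
Lemma cReM (a b : C) : complex.Re (a * b) = complex.Re a * complex.Re b - complex.Im a * complex.Im b.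
Proof. by case: a; case: b. Qed.
Lemma cImM (a b : C) : complex.Im (a * b) = complex.Re a * complex.Im b + complex.Im a * complex.Re b.
Proof. by case: a => a1 a2; case: b => b1 b2 /=. Qed.

Definition cder (f : R -> C) (x : R) (dd : C) :=
  is_derive x (1:R) (fun y => complex.Re (f y)) (complex.Re dd) /\
  is_derive x (1:R) (fun y => complex.Im (f y)) (complex.Im dd).

Lemma cder_cderivable f x dd : cder f x dd -> cderivable f x.
Proof. by case=> [[h1 _] [h2 _]]; split. Qed.

Lemma cder_cderive f x dd : cder f x dd -> cderive f x = dd.
Proof.
case=> [[_ h1] [_ h2]]; rewrite /cderive !derive1E h1 h2.
by case: dd {h1 h2}.
Qed.

Lemma cderivable_cder f x : cderivable f x -> cder f x (cderive f x).
Proof.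
case=> h1 h2; rewrite /cder /cderive /= !derive1E; split; exact: derivableP.
Qed.

Lemma cder_ext f g x dd : (forall y, f y = g y) -> cder f x dd -> cder g x dd.
Proof. by move=> fg; have -> : g = f by apply/funext => y; rewrite fg. Qed.

Lemma cder_eq f x d1 d2 : cder f x d1 -> d1 = d2 -> cder f x d2.
Proof. by move=> h <-. Qed.

Lemma cder_cst (c : C) x : cder (fun _ => c) x 0.
Proof. by split; apply: is_derive_cst. Qed.

Lemma cder_id x : cder (fun y => y%:C) x 1.
Proof. by split => /=; [apply: is_derive_id | apply: is_derive_cst]. Qed.

Lemma cder_add f g x df dg : cder f x df -> cder g x dg ->
  cder (fun y => f y + g y) x (df + dg).
Proof.
case=> f1 f2 [g1 g2]; split.
- have -> : (fun y => complex.Re (f y + g y)) = (fun y => complex.Re (f y)) + (fun y => complex.Re (g y)).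
    by apply/funext => y; rewrite cReD.
  rewrite cReD; exact: is_deriveD.
- have -> : (fun y => complex.Im (f y + g y)) = (fun y => complex.Im (f y)) + (fun y => complex.Im (g y)).
    by apply/funext => y; rewrite cImD.
  rewrite cImD; exact: is_deriveD.
Qed.

Lemma cder_opp f x df : cder f x df -> cder (fun y => - f y) x (- df).
Proof.
case=> f1 f2; split.
- have -> : (fun y => complex.Re (- f y)) = - (fun y => complex.Re (f y)).
    by apply/funext => y; rewrite cReN.
  rewrite cReN; exact: is_deriveN.
- have -> : (fun y => complex.Im (- f y)) = - (fun y => complex.Im (f y)).
    by apply/funext => y; rewrite cImN.
  rewrite cImN; exact: is_deriveN.
Qed.

Lemma cder_sub f g x df dg : cder f x df -> cder g x dg ->
  cder (fun y => f y - g y) x (df - dg).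
Proof. by move=> hf hg; apply: cder_add => //; apply: cder_opp. Qed.

Lemma cder_mul f g x df dg : cder f x df -> cder g x dg ->
  cder (fun y => f y * g y) x (df * g x + f x * dg).
Proof.
case=> f1 f2 [g1 g2]; split.
- have -> : (fun y => complex.Re (f y * g y)) =
     (fun y => complex.Re (f y)) * (fun y => complex.Re (g y)) -
     (fun y => complex.Im (f y)) * (fun y => complex.Im (g y)).
    by apply/funext => y; rewrite cReM.
  apply: is_derive_eq (is_deriveB (is_deriveM f1 g1) (is_deriveM f2 g2)) _.
  rewrite cReD !cReM /=; rewrite /GRing.scale /=; ring.
- have -> : (fun y => complex.Im (f y * g y)) =
     (fun y => complex.Re (f y)) * (fun y => complex.Im (g y)) +
     (fun y => complex.Im (f y)) * (fun y => complex.Re (g y)).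
    by apply/funext => y; rewrite cImM.
  apply: is_derive_eq (is_deriveD (is_deriveM f1 g2) (is_deriveM f2 g1)) _.
  rewrite cImD !cImM /=; rewrite /GRing.scale /=; ring.
Qed.

Lemma cder_cexp f x df : cder f x df ->
  cder (fun y => cexp (f y)) x (cexp (f x) * df).
Proof.
case=> f1 f2; rewrite /cexp; split => /=.
- have -> : (fun y => expR (complex.Re (f y)) * cos (complex.Im (f y))) =
     (expR \o (fun y => complex.Re (f y))) * (cos \o (fun y => complex.Im (f y))).
    by apply/funext.
  apply: is_derive_eq (is_deriveM (is_derive1_comp (is_derive_expR _) f1)
     (is_derive1_comp (is_derive_cos _) f2)) _.
  rewrite /GRing.scale /= /comp cReM /=; ring.
- have -> : (fun y => expR (complex.Re (f y)) * sin (complex.Im (f y))) =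
     (expR \o (fun y => complex.Re (f y))) * (sin \o (fun y => complex.Im (f y))).
    by apply/funext.
  apply: is_derive_eq (is_deriveM (is_derive1_comp (is_derive_expR _) f1)
     (is_derive1_comp (is_derive_sin _) f2)) _.
  rewrite /GRing.scale /= /comp cImM /=; ring.
Qed.


Lemma cReV (z : R[i]) : complex.Re (z^-1) = complex.Re z / (complex.Re z ^+ 2 + complex.Im z ^+ 2).
Proof. by case: z. Qed.
Lemma cImV (z : R[i]) : complex.Im (z^-1) = - (complex.Im z / (complex.Re z ^+ 2 + complex.Im z ^+ 2)).
Proof. by case: z. Qed.

Lemma logder_re (a b p q : R -> R) x dp dq :
  (forall y, p y = expR (a y) * cos (b y)) ->
  (forall y, q y = expR (a y) * sin (b y)) ->
  is_derive x (1:R) p dp -> is_derive x (1:R) q dq ->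
  is_derive x (1:R) a ((dp * p x + dq * q x) / (p x ^+ 2 + q x ^+ 2)).
Proof.
move=> hp hq dP dQ.
have hN : forall y, p y * p y + q y * q y = expR (a y + a y).
  move=> y; rewrite hp hq expRD.
  have := cos2Dsin2 (b y); rewrite !expr2 => h.
  transitivity (expR (a y) * expR (a y) * (cos (b y) * cos (b y) + sin (b y) * sin (b y))); first ring.
  by rewrite h mulr1.
have -> : a = cst (2^-1 : R) * (@ln R \o (p * p + q * q)).
  by apply/funext => y; rewrite /= !fctE hN expRK; field.
have Npos : 0 < (p * p + q * q) x by rewrite !fctE hN expR_gt0.
have dd := is_deriveM (is_derive_cst (2^-1 : R) x 1) (is_derive1_comp (is_derive1_ln Npos)
   (is_deriveD (is_deriveM dP dP) (is_deriveM dQ dQ))).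
apply: is_derive_eq dd _.
rewrite /GRing.scale /= !fctE !expr2; field.
by move: Npos; rewrite !fctE => /lt0r_neq0.
Qed.

Lemma logder_im (a b p q : R -> R) x dp dq :
  (forall y, p y = expR (a y) * cos (b y)) ->
  (forall y, q y = expR (a y) * sin (b y)) ->
  {for x, continuous b} ->
  is_derive x (1:R) p dp -> is_derive x (1:R) q dq ->
  is_derive x (1:R) b ((dq * p x - dp * q x) / (p x ^+ 2 + q x ^+ 2)).
Proof.
move=> hp hq hc dP dQ.
have hN : forall y, p y * p y + q y * q y = expR (a y + a y).
  move=> y; rewrite hp hq expRD.
  have := cos2Dsin2 (b y); rewrite !expr2 => h.
  transitivity (expR (a y) * expR (a y) * (cos (b y) * cos (b y) + sin (b y) * sin (b y))); first ring.
  by rewrite h mulr1.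
have Npos : 0 < p x * p x + q x * q x by rewrite hN expR_gt0.
pose P := p * cst (p x) + q * cst (q x).
pose Q := q * cst (p x) - p * cst (q x).
have dPP : is_derive x (1:R) P (p x *: 0 + p x *: dp + (q x *: 0 + q x *: dq)).
  exact: is_deriveD (is_deriveM dP (is_derive_cst _ _ _)) (is_deriveM dQ (is_derive_cst _ _ _)).
have dQQ : is_derive x (1:R) Q (q x *: 0 + p x *: dq - (p x *: 0 + q x *: dp)).
  exact: is_deriveB (is_deriveM dQ (is_derive_cst _ _ _)) (is_deriveM dP (is_derive_cst _ _ _)).
have Px : P x = p x * p x + q x * q x by [].
have Qx : Q x = 0 by rewrite /Q !fctE /=; ring.
have PxN : P x != 0 by rewrite Px lt0r_neq0.
have dR := is_deriveM dQQ (is_deriveV PxN dPP).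
have dA := is_derive1_comp (is_derive1_atan _) dR.
have dG := is_deriveD (is_derive_cst (b x) x 1) dA.
suff hnear : \forall y \near x, (cst (b x) + (atan \o (Q * (fun y => (P y)^-1)))) y = b y.
  apply: is_derive_eq (near_eq_is_derive hnear dG) _.
  rewrite !fctE Qx /GRing.scale /= Px; field.
  by rewrite lt0r_neq0 //; rewrite -Px.
have pi2 : (0:R) < pi / 2 by rewrite divr_gt0 // pi_gt0.
near=> y.
have : `|b x - b y| < pi / 2 by near: y; apply: cvgr_dist_lt.
move=> hby.
rewrite !fctE /=.
have E0 : expR (a y) * expR (a x) != 0 by rewrite mulf_neq0 // lt0r_neq0 // expR_gt0.
have -> : Q y * (P y)^-1 = tan (b y - b x).
  rewrite /Q /P !fctE /= !hp !hq /tan sinB cosB.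
  rewrite (_ : expR (a y) * sin (b y) * (expR (a x) * cos (b x)) -
     expR (a y) * cos (b y) * (expR (a x) * sin (b x)) =
     (expR (a y) * expR (a x)) * (sin (b y) * cos (b x) - cos (b y) * sin (b x))); last by ring.
  rewrite (_ : expR (a y) * cos (b y) * (expR (a x) * cos (b x)) +
     expR (a y) * sin (b y) * (expR (a x) * sin (b x)) =
     (expR (a y) * expR (a x)) * (cos (b y) * cos (b x) + sin (b y) * sin (b x))); last by ring.
  by rewrite invfM mulrACA mulfV // mul1r.
rewrite tanK; first by rewrite addrC subrK.
rewrite in_itv /=; move: hby; rewrite distrC ltr_norml => /andP[h1 h2].
by rewrite h1 h2.
Unshelve. all: by end_near.
Qed.

Lemma cexp_neq0 (z : C) : cexp z != 0.
Proof.
rewrite /cexp; apply/negP => /eqP [h1 h2].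
have := cos2Dsin2 (complex.Im z).
have e : expR (complex.Re z) != 0 by rewrite lt0r_neq0 // expR_gt0.
have c0 : cos (complex.Im z) = 0.
  by move/eqP: h1; rewrite mulf_eq0 (negbTE e) => /eqP.
have s0 : sin (complex.Im z) = 0.
  by move/eqP: h2; rewrite mulf_eq0 (negbTE e) => /eqP.
by rewrite c0 s0 expr0n /= addr0 => /eqP; rewrite eq_sym oner_eq0.
Qed.

Lemma normsq_neq0 (z : C) : z != 0 -> complex.Re z ^+ 2 + complex.Im z ^+ 2 != 0.
Proof.
case: z => a b /= nz; apply/negP => /eqP h.
move: h => /eqP; rewrite paddr_eq0 ?sqr_ge0 // !sqrf_eq0 => /andP[/eqP ha /eqP hb].
by move: nz; rewrite ha hb eqxx.
Qed.

Lemma cder_log (th F : R -> C) x dF :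
  (forall y, cexp (th y) = F y) ->
  {for x, continuous (fun y => complex.Im (th y))} ->
  cder F x dF -> cder th x (dF / F x).
Proof.
move=> hF hc [dp dq].
have hp : forall y, complex.Re (F y) = expR (complex.Re (th y)) * cos (complex.Im (th y)).
  by move=> y; rewrite -hF.
have hq : forall y, complex.Im (F y) = expR (complex.Re (th y)) * sin (complex.Im (th y)).
  by move=> y; rewrite -hF.
have Fx0 : F x != 0 by rewrite -hF cexp_neq0.
have nz' := normsq_neq0 Fx0.
split.
- apply: is_derive_eq (@logder_re (fun y => complex.Re (th y)) (fun y => complex.Im (th y)) (fun y => complex.Re (F y)) (fun y => complex.Im (F y)) x _ _ hp hq dp dq) _.
  rewrite cReM cReV cImV; field; exact: nz'.
- apply: is_derive_eq (@logder_im (fun y => complex.Re (th y)) (fun y => complex.Im (th y)) (fun y => complex.Re (F y)) (fun y => complex.Im (F y)) x _ _ hp hq hc dp dq) _.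
  rewrite cImM cReV cImV; field; exact: nz'.
Qed.

Lemma cder_scale (c : C) f x df : cder f x df -> cder (fun y => c * f y) x (c * df).
Proof.
move=> h; apply: cder_eq (cder_mul (cder_cst c x) h) _; ring.
Qed.

End Calc.



Section Int.
Variables (R : realType) (d : measure_display) (T : measurableType d).
Variables (mu : {measure set T -> \bar R}) (D : set T) (mD : measurable D).
Notation C := R[i].

Lemma cintegrable_add (f g : T -> C) : cintegrable mu D f -> cintegrable mu D g ->
  cintegrable mu D (fun t => f t + g t).
Proof.
case=> f1 f2 [g1 g2]; split.
- have -> : (fun t => (complex.Re (f t + g t))%:E) =
    (fun t => (complex.Re (f t))%:E) \+ (fun t => (complex.Re (g t))%:E).
    by apply/funext => t; rewrite cReD.
  exact: integrableD.
- have -> : (fun t => (complex.Im (f t + g t))%:E) =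
    (fun t => (complex.Im (f t))%:E) \+ (fun t => (complex.Im (g t))%:E).
    by apply/funext => t; rewrite cImD.
  exact: integrableD.
Qed.

Lemma cint_add (f g : T -> C) : cintegrable mu D f -> cintegrable mu D g ->
  cint mu D (fun t => f t + g t) = cint mu D f + cint mu D g.
Proof.
case=> f1 f2 [g1 g2]; rewrite /cint.
have -> : (fun t => complex.Re (f t + g t)) = (fun t => complex.Re (f t) + complex.Re (g t)).
  by apply/funext => t; rewrite cReD.
have -> : (fun t => complex.Im (f t + g t)) = (fun t => complex.Im (f t) + complex.Im (g t)).
  by apply/funext => t; rewrite cImD.
by rewrite !RintegralD.
Qed.

Lemma cintegrable_scale (c : C) (f : T -> C) : cintegrable mu D f ->
  cintegrable mu D (fun t => c * f t).
Proof.
case=> f1 f2; split.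
- have -> : (fun t => (complex.Re (c * f t))%:E) =
    ((fun t => (complex.Re c)%:E * (complex.Re (f t))%:E) \-
    (fun t => (complex.Im c)%:E * (complex.Im (f t))%:E))%E.
    by apply/funext => t; rewrite cReM EFinB !EFinM.
  by apply: integrableB => //; apply: integrableZl.
- have -> : (fun t => (complex.Im (c * f t))%:E) =
    ((fun t => (complex.Re c)%:E * (complex.Im (f t))%:E) \+
    (fun t => (complex.Im c)%:E * (complex.Re (f t))%:E))%E.
    by apply/funext => t; rewrite cImM EFinD !EFinM.
  by apply: integrableD => //; apply: integrableZl.
Qed.

Lemma int_scal (k : R) (g : T -> R) : mu.-integrable D (EFin \o g) ->
  mu.-integrable D (EFin \o (fun t => k * g t)).
Proof.
move=> h; have -> : EFin \o (fun t => k * g t) = (fun t => k%:E * (EFin \o g) t)%E.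
  by apply/funext => t; rewrite /= EFinM.
exact: integrableZl.
Qed.

Lemma cint_scale (c : C) (f : T -> C) : cintegrable mu D f ->
  cint mu D (fun t => c * f t) = c * cint mu D f.
Proof.
case=> f1 f2; rewrite /cint.
have -> : (fun t => complex.Re (c * f t)) =
   (fun t => complex.Re c * complex.Re (f t) - complex.Im c * complex.Im (f t)).
  by apply/funext => t; rewrite cReM.
have -> : (fun t => complex.Im (c * f t)) =
   (fun t => complex.Re c * complex.Im (f t) + complex.Im c * complex.Re (f t)).
  by apply/funext => t; rewrite cImM.
rewrite RintegralB //; last 2 first.
- exact: int_scal.
- exact: int_scal.
rewrite RintegralD //; last 2 first.
- exact: int_scal.
- exact: int_scal.
rewrite !RintegralZl //.
by case: c.
Qed.

Lemma cint_eq (f g : T -> C) : (forall t, D t -> f t = g t) ->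
  cint mu D f = cint mu D g.
Proof.
move=> fg; rewrite /cint.
by congr (Complex _ _); apply: eq_Rintegral => t /set_mem Dt; rewrite fg.
Qed.

Lemma cintegrable_eq (f g : T -> C) : (forall t, D t -> f t = g t) ->
  cintegrable mu D f -> cintegrable mu D g.
Proof.
move=> fg [f1 f2]; split.
- by apply: eq_integrable f1 => // t /set_mem Dt; rewrite fg.
- by apply: eq_integrable f2 => // t /set_mem Dt; rewrite fg.
Qed.

Variables (w K K' : T -> C).

Lemma zintegrable_add F G : zintegrable mu D w K K' F -> zintegrable mu D w K K' G ->
  zintegrable mu D w K K' (fun l l' => F l l' + G l l').
Proof.
move=> hF hG; rewrite /zintegrable.
have -> : (fun t => w t * (F (K t) (K' t) + G (K t) (K' t))) =
  (fun t => w t * F (K t) (K' t) + w t * G (K t) (K' t)).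
  by apply/funext => t; rewrite mulrDr.
exact: cintegrable_add.
Qed.

Lemma zint_add F G : zintegrable mu D w K K' F -> zintegrable mu D w K K' G ->
  zint mu D w K K' (fun l l' => F l l' + G l l') = zint mu D w K K' F + zint mu D w K K' G.
Proof.
move=> hF hG; rewrite /zint.
have -> : (fun t => w t * (F (K t) (K' t) + G (K t) (K' t))) =
  (fun t => w t * F (K t) (K' t) + w t * G (K t) (K' t)).
  by apply/funext => t; rewrite mulrDr.
exact: cint_add.
Qed.

Lemma zintegrable_scale c F : zintegrable mu D w K K' F ->
  zintegrable mu D w K K' (fun l l' => c * F l l').
Proof.
move=> hF; rewrite /zintegrable.
have -> : (fun t => w t * (c * F (K t) (K' t))) = (fun t => c * (w t * F (K t) (K' t))).
  by apply/funext => t; rewrite mulrCA.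
exact: cintegrable_scale.
Qed.

Lemma zint_scale c F : zintegrable mu D w K K' F ->
  zint mu D w K K' (fun l l' => c * F l l') = c * zint mu D w K K' F.
Proof.
move=> hF; rewrite /zint.
have -> : (fun t => w t * (c * F (K t) (K' t))) = (fun t => c * (w t * F (K t) (K' t))).
  by apply/funext => t; rewrite mulrCA.
exact: cint_scale.
Qed.

Lemma zint_eq F G : (forall t, D t -> F (K t) (K' t) = G (K t) (K' t)) ->
  zint mu D w K K' F = zint mu D w K K' G.
Proof. by move=> h; apply: cint_eq => t Dt; rewrite h. Qed.

Lemma zintegrable_eq F G : (forall t, D t -> F (K t) (K' t) = G (K t) (K' t)) ->
  zintegrable mu D w K K' F -> zintegrable mu D w K K' G.
Proof. by move=> h; apply: cintegrable_eq => t Dt; rewrite h. Qed.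

Lemma zintegrable_sub F G : zintegrable mu D w K K' F -> zintegrable mu D w K K' G ->
  zintegrable mu D w K K' (fun l l' => F l l' - G l l').
Proof.
move=> hF hG.
apply: zintegrable_eq (zintegrable_add hF (zintegrable_scale (-1) hG)) => t _.
by rewrite mulN1r.
Qed.

Lemma zint_sub F G : zintegrable mu D w K K' F -> zintegrable mu D w K K' G ->
  zint mu D w K K' (fun l l' => F l l' - G l l') = zint mu D w K K' F - zint mu D w K K' G.
Proof.
move=> hF hG.
rewrite -(@zint_eq (fun l l' => F l l' + (-1) * G l l')); last by move=> t _; rewrite mulN1r.
by rewrite zint_add ?zint_scale ?mulN1r //; apply: zintegrable_scale.
Qed.

End Int.



Section Main.
Variables (R : realType) (d : measure_display) (T : measurableType d).
Variables (mu : {measure set T -> \bar R}) (D : set T) (w K K' : T -> R[i]).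
Variables (u : int -> R -> R -> R[i] -> int -> R[i]) (phi : int -> R -> R -> R[i]).
Hypothesis mD : measurable D.
Hypothesis HD : forall t, D t -> admissible D K' (K t) /\ K' t != 0.
Hypothesis Hint : forall n x1 xm k i, admissible D K' k ->
     zintegrable mu D w K K' (eq_integrand u n k i x1 xm).
Hypothesis Hsol : forall n x1 xm k i, admissible D K' k ->
     u n x1 xm k i + zint mu D w K K' (eq_integrand u n k i x1 xm)
       = rho n x1 xm k * k ^ i.
Hypothesis Huniq : forall n x1 xm (v : R[i] -> R[i]),
     (forall k, admissible D K' k ->
        zintegrable mu D w K K'
          (fun l l' => rho n x1 xm k * Omega k l' * sigma n x1 xm l' * v l)) ->
     (forall k, admissible D K' k ->
        v k + zint mu D w K K'
          (fun l l' => rho n x1 xm k * Omega k l' * sigma n x1 xm l' * v l) = 0) ->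
     forall k, admissible D K' k -> v k = 0.
Hypothesis HUint : forall n x1 xm i j, zintegrable mu D w K K' (U_integrand u n i j x1 xm).
Hypothesis Hdu : forall n x1 xm k i, admissible D K' k ->
     cderivable (fun y => u n y xm k i) x1 /\ cderivable (fun y => u n x1 y k i) xm.
Hypothesis Hdeq : forall n k i, admissible D K' k ->
     diff_under1 mu D w K K' (eq_integrand u n k i) /\
     diff_underm mu D w K K' (eq_integrand u n k i).
Hypothesis HdU : forall n i j,
     diff_under1 mu D w K K' (U_integrand u n i j) /\
     diff_underm mu D w K K' (U_integrand u n i j).
Hypothesis Hphi : forall n x1 xm, cexp (phi n x1 xm) = 1 - Umat mu D w K K' u n x1 xm 0 (-1).
Hypothesis Hphic : forall n x1 xm,
     ccontinuous (fun y => phi n y xm) /\ ccontinuous (fun y => phi n x1 y).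

Notation C := R[i].
Notation Z := (zint mu D w K K').
Notation Zi := (zintegrable mu D w K K').
Notation adm := (admissible D K').
Notation U := (Umat mu D w K K' u).

Definition kern n x1 xm (k : C) (f : C -> C) :=
  fun l l' => rho n x1 xm k * Omega k l' * sigma n x1 xm l' * f l.

Lemma uniq2 n x1 xm (f g rhs : C -> C) :
  (forall k, adm k -> Zi (kern n x1 xm k f)) ->
  (forall k, adm k -> Zi (kern n x1 xm k g)) ->
  (forall k, adm k -> f k + Z (kern n x1 xm k f) = rhs k) ->
  (forall k, adm k -> g k + Z (kern n x1 xm k g) = rhs k) ->
  forall k, adm k -> f k = g k.
Proof.
move=> If Ig Ef Eg k ak.
suff: (fun l => f l - g l) k = 0 by move/eqP; rewrite subr_eq0 => /eqP.
apply: (@Huniq n x1 xm (fun l => f l - g l)) => // k' ak'.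
- apply: (zintegrable_eq mD) (zintegrable_sub mD (If k' ak') (Ig k' ak')) => t _.
  by rewrite /kern; ring.
- rewrite -(@zint_eq _ _ _ mu D w K K' (fun l l' => kern n x1 xm k' f l l' - kern n x1 xm k' g l l')); last first.
    by move=> t _; rewrite /kern; ring.
  rewrite zint_sub //; last by apply: Ig.
  rewrite (_ : f k' - g k' + (Z (kern n x1 xm k' f) - Z (kern n x1 xm k' g)) =
    (f k' + Z (kern n x1 xm k' f)) - (g k' + Z (kern n x1 xm k' g))); last by ring.
  by rewrite Ef // Eg // subrr.
  exact: If.
Qed.

Lemma kern_lin n x1 xm k (a b : C) (f g : C -> C) :
  Zi (kern n x1 xm k f) -> Zi (kern n x1 xm k g) ->
  Zi (kern n x1 xm k (fun l => a * f l + b * g l)) /\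
  Z (kern n x1 xm k (fun l => a * f l + b * g l)) =
    a * Z (kern n x1 xm k f) + b * Z (kern n x1 xm k g).
Proof.
move=> If Ig.
pose F := fun l l' => a * kern n x1 xm k f l l' + b * kern n x1 xm k g l l'.
have e : forall t, D t -> F (K t) (K' t) =
   kern n x1 xm k (fun l => a * f l + b * g l) (K t) (K' t).
  by move=> t _; rewrite /F /kern; ring.
split.
- apply: (@zintegrable_eq _ _ _ mu D mD w K K' F _ e).
  by apply: zintegrable_add => //; apply: zintegrable_scale.
- rewrite -(@zint_eq _ _ _ mu D w K K' F _ e) /F zint_add //; last 2 first.
  + exact: zintegrable_scale.
  + exact: zintegrable_scale.
  by rewrite !zint_scale.
Qed.


Lemma rhoS n (x1 xm : R) (k : C) : k != 0 -> rho (n + 1) x1 xm k = rho n x1 xm k * k.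
Proof. by move=> k0; rewrite /rho expfzDr // expr1z mulrA. Qed.

Lemma rhoP n (x1 xm : R) (k : C) : k != 0 -> rho (n - 1) x1 xm k = rho n x1 xm k * k^-1.
Proof. by move=> k0; rewrite /rho expfzDr // exprN1 mulrA. Qed.

Lemma sigS n (x1 xm : R) (l : C) : l != 0 -> sigma (n + 1) x1 xm l = sigma n x1 xm l * (- l)^-1.
Proof.
move=> l0; rewrite /sigma opprD expfzDr ?oppr_eq0 // exprN1 mulrA //.
Qed.

Lemma sigP n (x1 xm : R) (l : C) : l != 0 -> sigma (n - 1) x1 xm l = sigma n x1 xm l * (- l).
Proof.
move=> l0; rewrite /sigma opprB (addrC 1) expfzDr ?oppr_eq0 // expr1z; ring.
Qed.

Lemma Dprops t : D t -> K t != 0 /\ K' t != 0 /\ forall k, adm k -> k + K' t != 0.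
Proof.
move=> Dt; have [[k0 _] l0] := HD Dt; split => //; split => // k [_ hk].
exact: hk.
Qed.

Lemma u_up n x1 xm k i : adm k ->
  u (n + 1) x1 xm k i = u n x1 xm k (i + 1) - U (n + 1) x1 xm i 0 * u n x1 xm k 0.
Proof.
move=> ak.
set U' := U (n + 1) x1 xm i 0.
pose f := fun l => u (n + 1) x1 xm l i.
pose g := fun l => 1 * u n x1 xm l (i + 1) + (- U') * u n x1 xm l 0.
pose rhs := fun k => rho n x1 xm k * k ^ (i + 1) - U' * rho n x1 xm k.
pose Fk k := fun l l' => eq_integrand u (n + 1) k i x1 xm l l' -
      rho n x1 xm k * U_integrand u (n + 1) i 0 x1 xm l l'.
have key : forall k, adm k -> forall t, D t ->
   Fk k (K t) (K' t) = kern n x1 xm k f (K t) (K' t).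
  move=> k1 [k10 hk] t Dt; have [_ [l0 _]] := Dprops Dt; have kl := hk t Dt.
  rewrite /Fk /eq_integrand /U_integrand /kern /f /Omega rhoS // sigS // expr0z.
  by field; rewrite kl l0.
have If : forall k, adm k -> Zi (kern n x1 xm k f).
  move=> k1 ak1; apply: (@zintegrable_eq _ _ _ mu D mD w K K' (Fk k1) _ (key k1 ak1)).
  by apply: zintegrable_sub => //; [apply: Hint | apply: zintegrable_scale].
have Ef : forall k, adm k -> f k + Z (kern n x1 xm k f) = rhs k.
  move=> k1 ak1; rewrite -(@zint_eq _ _ _ mu D w K K' (Fk k1) _ (key k1 ak1)) zint_sub //; last 2 first.
  + exact: Hint.
  + exact: zintegrable_scale.
  rewrite zint_scale // addrA /f Hsol // rhoS; last by case: ak1.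
  rewrite /rhs /U' /Umat expfzDr ?expr1z; last by case: ak1.
  ring.
have Ig : forall k, adm k -> Zi (kern n x1 xm k g).
  by move=> k1 ak1; case: (kern_lin 1 (- U') (Hint n x1 xm (i + 1) ak1) (Hint n x1 xm 0 ak1)).
have Eg : forall k, adm k -> g k + Z (kern n x1 xm k g) = rhs k.
  move=> k1 ak1; case: (kern_lin 1 (- U') (Hint n x1 xm (i + 1) ak1) (Hint n x1 xm 0 ak1)) => _ ->.
  rewrite /g.
  have h1 := Hsol n x1 xm (i + 1) ak1; have h0 := Hsol n x1 xm 0 ak1.
  rewrite /eq_integrand in h1 h0.
  rewrite (_ : forall a b c d e, 1 * a + e * b + (1 * c + e * d) = (a + c) + e * (b + d)); last by move=> *; ring.
  by rewrite h1 h0 expr0z /rhs; ring.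
have := uniq2 If Ig Ef Eg ak; rewrite /f /g => ->; ring.
Qed.


Lemma u_down n x1 xm k : adm k ->
  u (n - 1) x1 xm k 0 = (1 - U (n - 1) x1 xm 0 (-1)) * u n x1 xm k (-1).
Proof.
move=> ak.
set V' := U (n - 1) x1 xm 0 (-1).
pose f := fun l => u (n - 1) x1 xm l 0.
pose g := fun l => (1 - V') * u n x1 xm l (-1) + 0 * u n x1 xm l (-1).
pose rhs := fun k => rho n x1 xm k * k^-1 * (1 - V').
pose Fk k := fun l l' => eq_integrand u (n - 1) k 0 x1 xm l l' -
      (rho n x1 xm k * k^-1) * U_integrand u (n - 1) 0 (-1) x1 xm l l'.
have key : forall k, adm k -> forall t, D t ->
   Fk k (K t) (K' t) = kern n x1 xm k f (K t) (K' t).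
  move=> k1 [k10 hk] t Dt; have [_ [l0 _]] := Dprops Dt; have kl := hk t Dt.
  rewrite /Fk /eq_integrand /U_integrand /kern /f /Omega rhoP // sigP // exprN1.
  by field; rewrite kl l0 k10.
have If : forall k, adm k -> Zi (kern n x1 xm k f).
  move=> k1 ak1; apply: (@zintegrable_eq _ _ _ mu D mD w K K' (Fk k1) _ (key k1 ak1)).
  by apply: zintegrable_sub => //; [apply: Hint | apply: zintegrable_scale].
have Ef : forall k, adm k -> f k + Z (kern n x1 xm k f) = rhs k.
  move=> k1 ak1; rewrite -(@zint_eq _ _ _ mu D w K K' (Fk k1) _ (key k1 ak1)) zint_sub //; last 2 first.
  + exact: Hint.
  + exact: zintegrable_scale.
  rewrite zint_scale // addrA /f Hsol // rhoP; last by case: ak1.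
  rewrite /rhs /V' /Umat expr0z.
  ring.
have Ig : forall k, adm k -> Zi (kern n x1 xm k g).
  by move=> k1 ak1; case: (kern_lin (1 - V') 0 (Hint n x1 xm (-1) ak1) (Hint n x1 xm (-1) ak1)).
have Eg : forall k, adm k -> g k + Z (kern n x1 xm k g) = rhs k.
  move=> k1 ak1; case: (kern_lin (1 - V') 0 (Hint n x1 xm (-1) ak1) (Hint n x1 xm (-1) ak1)) => _ ->.
  rewrite /g.
  have h1 := Hsol n x1 xm (-1) ak1.
  rewrite /eq_integrand in h1.
  rewrite (_ : forall a b c e, e * a + 0 * a + (e * b + 0 * c) = e * (a + b)); last by move=> *; ring.
  by rewrite h1 exprN1 /rhs; ring.
have := uniq2 If Ig Ef Eg ak; rewrite /f /g => ->; ring.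
Qed.


Lemma cder_rho1 n (xm : R) (k : C) x1 : cder (fun y => rho n y xm k) x1 (k * rho n x1 xm k).
Proof.
rewrite /rho; apply: cder_eq (cder_mul (cder_cexp (cder_add (cder_scale k (cder_id x1))
   (cder_cst (k^-1 * xm%:C) x1))) (cder_cst (k ^ n) x1)) _.
ring.
Qed.

Lemma cder_rhom n (x1 : R) (k : C) xm : cder (fun y => rho n x1 y k) xm (k^-1 * rho n x1 xm k).
Proof.
rewrite /rho; apply: cder_eq (cder_mul (cder_cexp (cder_add
   (cder_cst (k * x1%:C) xm) (cder_scale k^-1 (cder_id xm)))) (cder_cst (k ^ n) xm)) _.
ring.
Qed.

Lemma cder_sig1 n (xm : R) (k : C) x1 : cder (fun y => sigma n y xm k) x1 (k * sigma n x1 xm k).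
Proof.
rewrite /sigma; apply: cder_eq (cder_mul (cder_cexp (cder_add (cder_scale k (cder_id x1))
   (cder_cst (k^-1 * xm%:C) x1))) (cder_cst ((- k) ^ (- n)) x1)) _.
ring.
Qed.

Lemma cder_sigm n (x1 : R) (k : C) xm : cder (fun y => sigma n x1 y k) xm (k^-1 * sigma n x1 xm k).
Proof.
rewrite /sigma; apply: cder_eq (cder_mul (cder_cexp (cder_add
   (cder_cst (k * x1%:C) xm) (cder_scale k^-1 (cder_id xm)))) (cder_cst ((- k) ^ (- n)) xm)) _.
ring.
Qed.

Lemma cder_unique (f : R -> C) (x : R) d1 d2 : cder f x d1 -> cder f x d2 -> d1 = d2.
Proof. by move=> h1 h2; rewrite -(cder_cderive h1) -(cder_cderive h2). Qed.

Lemma d1_u n x1 xm k i : adm k ->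
  cder (fun y => u n y xm k i) x1
    (u n x1 xm k (i + 1) - U n x1 xm i 0 * u n x1 xm k 0).
Proof.
move=> ak.
set U' := U n x1 xm i 0.
pose ff := fun l => pd1 (fun a b => u n a b l i) x1 xm.
suff : ff k = u n x1 xm k (i + 1) - U' * u n x1 xm k 0.
  by rewrite /ff /pd1 => <-; apply: cderivable_cder; case: (Hdu n x1 xm i ak).
pose g := fun l => 1 * u n x1 xm l (i + 1) + (- U') * u n x1 xm l 0.
pose rhs := fun k => rho n x1 xm k * k ^ (i + 1) - U' * rho n x1 xm k.
pose P k := fun l l' => pd1 (fun a b => eq_integrand u n k i a b l l') x1 xm.
pose Fk k := fun l l' => P k l l' - rho n x1 xm k * U_integrand u n i 0 x1 xm l l'.
have key : forall k, adm k -> forall t, D t ->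
   Fk k (K t) (K' t) = kern n x1 xm k ff (K t) (K' t).
  move=> k1 [k10 hk] t Dt; have [[Kt0 _] l0] := HD Dt; have kl := hk t Dt.
  have [aK _] := HD Dt.
  rewrite /Fk /P /pd1 /eq_integrand.
  have du := cderivable_cder (Hdu n x1 xm i aK).1.
  rewrite (cder_cderive (cder_mul (cder_mul (cder_mul (cder_rho1 n xm k1 x1)
     (cder_cst (Omega k1 (K' t)) x1)) (cder_sig1 n xm (K' t) x1)) du)).
  rewrite /U_integrand /kern /ff /pd1 /Omega expr0z.
  by field; rewrite kl.
have If : forall k, adm k -> Zi (kern n x1 xm k ff).
  move=> k1 ak1; apply: (@zintegrable_eq _ _ _ mu D mD w K K' (Fk k1) _ (key k1 ak1)).
  apply: zintegrable_sub => //; last by apply: zintegrable_scale.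
  by case: ((Hdeq n i ak1).1 x1 xm) => _ [].
have Ef : forall k, adm k -> ff k + Z (kern n x1 xm k ff) = rhs k.
  move=> k1 ak1; rewrite -(@zint_eq _ _ _ mu D w K K' (Fk k1) _ (key k1 ak1)) zint_sub //; last 2 first.
  + by case: ((Hdeq n i ak1).1 x1 xm) => _ [].
  + exact: zintegrable_scale.
  rewrite zint_scale //.
  case: ((Hdeq n i ak1).1 x1 xm) => _ [_ [dZ eZ]].
  have E1 := cder_add (cderivable_cder (Hdu n x1 xm i ak1).1) (cderivable_cder dZ).
  have E2 : cder (fun y => u n y xm k1 i + Z (eq_integrand u n k1 i y xm)) x1
      (k1 * rho n x1 xm k1 * k1 ^ i + rho n x1 xm k1 * 0).
    apply: (cder_ext _ (cder_mul (cder_rho1 n xm k1 x1) (cder_cst (k1 ^ i) x1))) => y.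
    by rewrite Hsol.
  have E := cder_unique E1 E2.
  have eZ' : cderive (fun y => Z (eq_integrand u n k1 i y xm)) x1 = Z (P k1) := eZ.
  rewrite eZ' in E.
  have eff : ff k1 = cderive (fun y => u n y xm k1 i) x1 by [].
  rewrite eff (_ : forall a b c, a + (b - c) = (a + b) - c); last by move=> *; ring.
  rewrite E /rhs /U' /Umat expfzDr ?expr1z; last by case: ak1.
  ring.
have Ig : forall k, adm k -> Zi (kern n x1 xm k g).
  by move=> k1 ak1; case: (kern_lin 1 (- U') (Hint n x1 xm (i + 1) ak1) (Hint n x1 xm 0 ak1)).
have Eg : forall k, adm k -> g k + Z (kern n x1 xm k g) = rhs k.
  move=> k1 ak1; case: (kern_lin 1 (- U') (Hint n x1 xm (i + 1) ak1) (Hint n x1 xm 0 ak1)) => _ ->.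
  rewrite /g.
  have h1 := Hsol n x1 xm (i + 1) ak1; have h0 := Hsol n x1 xm 0 ak1.
  rewrite /eq_integrand in h1 h0.
  rewrite (_ : forall a b c d e, 1 * a + e * b + (1 * c + e * d) = (a + c) + e * (b + d)); last by move=> *; ring.
  by rewrite h1 h0 expr0z /rhs; ring.
have := uniq2 If Ig Ef Eg ak; rewrite /ff /g => ->; ring.
Qed.


Lemma dm_u n x1 xm k i : adm k ->
  cder (fun y => u n x1 y k i) xm
    (u n x1 xm k (i - 1) - U n x1 xm i (-1) * u n x1 xm k (-1)).
Proof.
move=> ak.
set U' := U n x1 xm i (-1).
pose ff := fun l => pdm (fun a b => u n a b l i) x1 xm.
suff : ff k = u n x1 xm k (i - 1) - U' * u n x1 xm k (-1).
  by rewrite /ff /pdm => <-; apply: cderivable_cder; case: (Hdu n x1 xm i ak).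
pose g := fun l => 1 * u n x1 xm l (i - 1) + (- U') * u n x1 xm l (-1).
pose rhs := fun k => rho n x1 xm k * k ^ (i - 1) - U' * (rho n x1 xm k * k ^ (-1)).
pose P k := fun l l' => pdm (fun a b => eq_integrand u n k i a b l l') x1 xm.
pose Fk k := fun l l' => P k l l' - (rho n x1 xm k * k^-1) * U_integrand u n i (-1) x1 xm l l'.
have key : forall k, adm k -> forall t, D t ->
   Fk k (K t) (K' t) = kern n x1 xm k ff (K t) (K' t).
  move=> k1 [k10 hk] t Dt; have [[Kt0 _] l0] := HD Dt; have kl := hk t Dt.
  have [aK _] := HD Dt.
  rewrite /Fk /P /pdm /eq_integrand.
  have du := cderivable_cder (Hdu n x1 xm i aK).2.
  rewrite (cder_cderive (cder_mul (cder_mul (cder_mul (cder_rhom n x1 k1 xm)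
     (cder_cst (Omega k1 (K' t)) xm)) (cder_sigm n x1 (K' t) xm)) du)).
  rewrite /U_integrand /kern /ff /pdm /Omega exprN1.
  by field; rewrite kl l0 k10.
have If : forall k, adm k -> Zi (kern n x1 xm k ff).
  move=> k1 ak1; apply: (@zintegrable_eq _ _ _ mu D mD w K K' (Fk k1) _ (key k1 ak1)).
  apply: zintegrable_sub => //; last by apply: zintegrable_scale.
  by case: ((Hdeq n i ak1).2 x1 xm) => _ [].
have Ef : forall k, adm k -> ff k + Z (kern n x1 xm k ff) = rhs k.
  move=> k1 ak1; rewrite -(@zint_eq _ _ _ mu D w K K' (Fk k1) _ (key k1 ak1)) zint_sub //; last 2 first.
  + by case: ((Hdeq n i ak1).2 x1 xm) => _ [].
  + exact: zintegrable_scale.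
  rewrite zint_scale //.
  case: ((Hdeq n i ak1).2 x1 xm) => _ [_ [dZ eZ]].
  have E1 := cder_add (cderivable_cder (Hdu n x1 xm i ak1).2) (cderivable_cder dZ).
  have E2 : cder (fun y => u n x1 y k1 i + Z (eq_integrand u n k1 i x1 y)) xm
      (k1^-1 * rho n x1 xm k1 * k1 ^ i + rho n x1 xm k1 * 0).
    apply: (cder_ext _ (cder_mul (cder_rhom n x1 k1 xm) (cder_cst (k1 ^ i) xm))) => y.
    by rewrite Hsol.
  have E := cder_unique E1 E2.
  have eZ' : cderive (fun y => Z (eq_integrand u n k1 i x1 y)) xm = Z (P k1) := eZ.
  rewrite eZ' in E.
  have eff : ff k1 = cderive (fun y => u n x1 y k1 i) xm by [].
  rewrite eff (_ : forall a b c, a + (b - c) = (a + b) - c); last by move=> *; ring.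
  rewrite E /rhs /U' /Umat expfzDr ?exprN1; last by case: ak1.
  ring.
have Ig : forall k, adm k -> Zi (kern n x1 xm k g).
  by move=> k1 ak1; case: (kern_lin 1 (- U') (Hint n x1 xm (i - 1) ak1) (Hint n x1 xm (-1) ak1)).
have Eg : forall k, adm k -> g k + Z (kern n x1 xm k g) = rhs k.
  move=> k1 ak1; case: (kern_lin 1 (- U') (Hint n x1 xm (i - 1) ak1) (Hint n x1 xm (-1) ak1)) => _ ->.
  rewrite /g.
  have h1 := Hsol n x1 xm (i - 1) ak1; have h0 := Hsol n x1 xm (-1) ak1.
  rewrite /eq_integrand in h1 h0.
  rewrite (_ : forall a b c d e, 1 * a + e * b + (1 * c + e * d) = (a + c) + e * (b + d)); last by move=> *; ring.
  by rewrite h1 h0 /rhs; ring.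
have := uniq2 If Ig Ef Eg ak; rewrite /ff /g => ->; ring.
Qed.


Lemma zint_comb3 n x1 xm i1 j1 c i2 j2 i3 j3 :
  Z (fun l l' => U_integrand u n i1 j1 x1 xm l l' - c * U_integrand u n i2 j2 x1 xm l l'
                 + U_integrand u n i3 j3 x1 xm l l') =
  U n x1 xm i1 j1 - c * U n x1 xm i2 j2 + U n x1 xm i3 j3.
Proof.
have I1 : Zi (fun l l' => U_integrand u n i1 j1 x1 xm l l' - c * U_integrand u n i2 j2 x1 xm l l').
  by apply: zintegrable_sub => //; apply: zintegrable_scale.
rewrite zint_add // zint_sub //; last by apply: zintegrable_scale.
by rewrite zint_scale.
Qed.

Lemma d1_U n x1 xm i j :
  cder (fun y => U n y xm i j) x1
    (U n x1 xm (i + 1) j - U n x1 xm i 0 * U n x1 xm 0 j + U n x1 xm i (j + 1)).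
Proof.
case: ((HdU n i j).1 x1 xm) => _ [_ [dZ eZ]].
have E1 := cderivable_cder dZ.
have eZ' : cderive (fun y => Z (U_integrand u n i j y xm)) x1 =
   Z (fun l l' => pd1 (fun a b => U_integrand u n i j a b l l') x1 xm) := eZ.
rewrite eZ' in E1.
apply: cder_eq E1 _.
rewrite -zint_comb3; apply: zint_eq => t Dt.
have [aK l0] := HD Dt.
rewrite /pd1 /U_integrand.
rewrite (cder_cderive (cder_mul (cder_mul (d1_u n x1 xm i aK)
   (cder_cst (K' t ^ j) x1)) (cder_sig1 n xm (K' t) x1))).
rewrite expfzDr // expr1z; ring.
Qed.

Lemma dm_U n x1 xm i j :
  cder (fun y => U n x1 y i j) xm
    (U n x1 xm (i - 1) j - U n x1 xm i (-1) * U n x1 xm (-1) j + U n x1 xm i (j - 1)).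
Proof.
case: ((HdU n i j).2 x1 xm) => _ [_ [dZ eZ]].
have E1 := cderivable_cder dZ.
have eZ' : cderive (fun y => Z (U_integrand u n i j x1 y)) xm =
   Z (fun l l' => pdm (fun a b => U_integrand u n i j a b l l') x1 xm) := eZ.
rewrite eZ' in E1.
apply: cder_eq E1 _.
rewrite -zint_comb3; apply: zint_eq => t Dt.
have [aK l0] := HD Dt.
rewrite /pdm /U_integrand.
rewrite (cder_cderive (cder_mul (cder_mul (dm_u n x1 xm i aK)
   (cder_cst (K' t ^ j) xm)) (cder_sigm n x1 (K' t) xm))).
rewrite expfzDr // exprN1; ring.
Qed.


Lemma zint_lin2 n x1 xm (a b : C) i1 j1 i2 j2 :
  Z (fun l l' => a * U_integrand u n i1 j1 x1 xm l l' + b * U_integrand u n i2 j2 x1 xm l l') =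
  a * U n x1 xm i1 j1 + b * U n x1 xm i2 j2.
Proof.
rewrite zint_add //; try by apply: zintegrable_scale.
by rewrite !zint_scale.
Qed.

Lemma relA n x1 xm :
  U (n + 1) x1 xm 0 0 * (1 - U n x1 xm 0 (-1)) = - U n x1 xm 1 (-1).
Proof.
have : U (n + 1) x1 xm 0 0 = (-1) * U n x1 xm 1 (-1) + U (n + 1) x1 xm 0 0 * U n x1 xm 0 (-1).
  rewrite -zint_lin2 [LHS]/Umat; apply: zint_eq => t Dt.
  have [aK l0] := HD Dt.
  rewrite /U_integrand u_up // add0r sigS // !expr0z exprN1.
  by field; rewrite l0.
move=> e; transitivity (U (n + 1) x1 xm 0 0 - U (n + 1) x1 xm 0 0 * U n x1 xm 0 (-1)); first by ring.
by rewrite {1}e; ring.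
Qed.

Lemma relB n x1 xm :
  U (n + 1) x1 xm 0 (-1) = - U n x1 xm 1 (-2) + U (n + 1) x1 xm 0 0 * U n x1 xm 0 (-2).
Proof.
rewrite (_ : - U n x1 xm 1 (-2) = (-1) * U n x1 xm 1 (-2)); last by ring.
rewrite -zint_lin2 [LHS]/Umat; apply: zint_eq => t Dt.
have [aK l0] := HD Dt.
have e2 : K' t ^ (-2) = (K' t)^-1 * (K' t)^-1.
  by rewrite (_ : (-2)%R = -1 + -1) // expfzDr // exprN1.
rewrite /U_integrand u_up // add0r sigS // e2 exprN1.
by field; rewrite l0.
Qed.

Lemma relC n x1 xm :
  (1 - U (n - 1) x1 xm 0 (-1)) * (1 - U n x1 xm (-1) 0) = 1.
Proof.
have : U (n - 1) x1 xm 0 (-1) = (- (1 - U (n - 1) x1 xm 0 (-1))) * U n x1 xm (-1) 0 + 0 * U n x1 xm (-1) 0.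
  rewrite -zint_lin2 [LHS]/Umat; apply: zint_eq => t Dt.
  have [aK l0] := HD Dt.
  rewrite /U_integrand u_down // sigP // !expr0z exprN1.
  by field; rewrite l0.
set V' := U (n - 1) x1 xm 0 (-1) => e.
have e' : V' = - (1 - V') * U n x1 xm (-1) 0 by rewrite {1}e; ring.
transitivity (1 - V' - (1 - V') * U n x1 xm (-1) 0); first by ring.
rewrite [X in 1 - X - _]e'; ring.
Qed.


Lemma cexpD' (a b : C) : cexp (a + b) = cexp a * cexp b.
Proof.
rewrite /cexp cReD cImD expRD cosD sinD; case: a => a1 a2; case: b => b1 b2 /=.
congr (Complex _ _); ring.
Qed.

Lemma cexp0 : cexp (0 : C) = 1.
Proof. by rewrite /cexp /= expR0 cos0 sin0 mulr1 mulr0. Qed.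

Lemma cexpN (a : C) : cexp (- a) = (cexp a)^-1.
Proof.
apply: (@mulIf _ (cexp a)); first exact: cexp_neq0.
by rewrite -cexpD' addNr cexp0 mulVf // cexp_neq0.
Qed.

Lemma V_neq0 n x1 xm : 1 - U n x1 xm 0 (-1) != 0.
Proof. by rewrite -Hphi cexp_neq0. Qed.

Lemma d1_phi n x1 xm : cder (fun y => phi n y xm) x1
  ((0 - (U n x1 xm 1 (-1) - U n x1 xm 0 0 * U n x1 xm 0 (-1) + U n x1 xm 0 0))
     / (1 - U n x1 xm 0 (-1))).
Proof.
have h := cder_sub (cder_cst 1 x1) (d1_U n x1 xm 0 (-1)).
rewrite (_ : (0 + 1)%R = 1 :> int) // (_ : (-1 + 1)%R = 0 :> int) // in h.
apply: (cder_log _ _ h) => [y|]; first by rewrite Hphi.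
exact: ((Hphic n x1 xm).1.2 x1).
Qed.

Lemma dm_phi n x1 xm : cder (fun y => phi n x1 y) xm
  ((0 - (U n x1 xm (-1) (-1) - U n x1 xm 0 (-1) * U n x1 xm (-1) (-1) + U n x1 xm 0 (-2)))
     / (1 - U n x1 xm 0 (-1))).
Proof.
have h := cder_sub (cder_cst 1 xm) (dm_U n x1 xm 0 (-1)).
rewrite (_ : (0 - 1)%R = -1 :> int) // (_ : (-1 - 1)%R = -2 :> int) // in h.
apply: (cder_log _ _ h) => [y|]; first by rewrite Hphi.
exact: ((Hphic n x1 xm).2.2 xm).
Qed.

Lemma linear_part n x1 xm k : adm k ->
     cderivable (fun y => phi n y xm) x1 /\
     pd1 (fun a b => u n a b k 0) x1 xm =
       pd1 (phi n) x1 xm * u n x1 xm k 0 + u (n + 1) x1 xm k 0 /\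
     pdm (fun a b => u n a b k 0) x1 xm =
       cexp (phi n x1 xm - phi (n - 1) x1 xm) * u (n - 1) x1 xm k 0.
Proof.
move=> ak; split; first exact: cder_cderivable (d1_phi n x1 xm).
split.
- rewrite /pd1 (cder_cderive (d1_u n x1 xm 0 ak)).
  rewrite (cder_cderive (d1_phi n x1 xm)) u_up //.
  rewrite (_ : (0 + 1)%R = 1 :> int) //.
  have nz := V_neq0 n x1 xm.
  have hA := relA n x1 xm.
  have hP : U (n + 1) x1 xm 0 0 = - U n x1 xm 1 (-1) / (1 - U n x1 xm 0 (-1)).
    by rewrite -hA mulfK.
  rewrite hP; field; exact: nz.
- rewrite /pdm (cder_cderive (dm_u n x1 xm 0 ak)) u_down //.
  rewrite (_ : (0 - 1)%R = -1 :> int) //.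
  rewrite -(Hphi (n - 1)) mulrA -cexpD' subrK Hphi; ring.
Qed.

Lemma toda_part n x1 xm :
     cderivable (fun y => phi n x1 y) xm /\
     cderivable (fun y => pdm (phi n) y xm) x1 /\
     pd1 (pdm (phi n)) x1 xm =
       cexp (phi n x1 xm - phi (n - 1) x1 xm) - cexp (phi (n + 1) x1 xm - phi n x1 xm).
Proof.
split; first exact: cder_cderivable (dm_phi n x1 xm).
pose G := fun y => - U n y xm (-1) (-1) - U n y xm 0 (-2) * cexp (- phi n y xm).
have eG : (fun y => pdm (phi n) y xm) = G.
  apply/funext => y; rewrite /pdm (cder_cderive (dm_phi n y xm)) /G cexpN Hphi.
  have nz := V_neq0 n y xm.
  field; exact: nz.
have dG := cder_sub (cder_opp (d1_U n x1 xm (-1) (-1)))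
   (cder_mul (d1_U n x1 xm 0 (-2)) (cder_cexp (cder_opp (d1_phi n x1 xm)))).
have dG' := @cder_ext _ _ (fun y => pdm (phi n) y xm) x1 _
   (fun y => esym (f_equal (fun h => h y) eG)) dG.
split; first exact: cder_cderivable dG'.
rewrite /pd1 (cder_cderive dG').
rewrite (_ : (-1 + 1)%R = 0 :> int) // (_ : (0 + 1)%R = 1 :> int) //
        (_ : (-2 + 1)%R = -1 :> int) //.
have nz := V_neq0 n x1 xm.
have nzm := V_neq0 (n - 1) x1 xm.
have e1 : cexp (phi n x1 xm - phi (n - 1) x1 xm) =
    (1 - U n x1 xm 0 (-1)) * (1 - U n x1 xm (-1) 0).
  transitivity (cexp (phi n x1 xm - phi (n - 1) x1 xm) *
    ((1 - U (n - 1) x1 xm 0 (-1)) * (1 - U n x1 xm (-1) 0))).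
    by rewrite relC mulr1.
  by rewrite mulrA -(Hphi (n - 1)) -cexpD' subrK Hphi.
have e2 : cexp (phi (n + 1) x1 xm - phi n x1 xm) =
    (1 - U (n + 1) x1 xm 0 (-1)) / (1 - U n x1 xm 0 (-1)).
  by rewrite cexpD' cexpN !Hphi.
have hA := relA n x1 xm.
have hP : U (n + 1) x1 xm 0 0 = - U n x1 xm 1 (-1) / (1 - U n x1 xm 0 (-1)).
  by rewrite -hA mulfK.
rewrite e1 e2 relB hP cexpN Hphi.
field; exact: nz.
Qed.

End Main.

Unset Implicit Arguments.

Theorem theorem3p1 (R : realType) (d : measure_display) (T : measurableType d)
  (mu : {measure set T -> \bar R}) (D : set T) (w K K' : T -> R[i])
  (u : int -> R -> R -> R[i] -> int -> R[i])
  (phi : int -> R -> R -> R[i])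
  (mD : measurable D)
  (* nondegeneracy of the integration domain *)
  (HD : forall t, D t -> admissible D K' (K t) /\ K' t != 0)
  (* u solves the linear integral equation (componentwise) *)
  (Hint : forall n x1 xm k i, admissible D K' k ->
     zintegrable mu D w K K' (eq_integrand u n k i x1 xm))
  (Hsol : forall n x1 xm k i, admissible D K' k ->
     u n x1 xm k i + zint mu D w K K' (eq_integrand u n k i x1 xm)
       = rho n x1 xm k * k ^ i)
  (* the homogeneous equation has only the zero solution *)
  (Huniq : forall n x1 xm (v : R[i] -> R[i]),
     (forall k, admissible D K' k ->
        zintegrable mu D w K K'
          (fun l l' => rho n x1 xm k * Omega k l' * sigma n x1 xm l' * v l)) ->
     (forall k, admissible D K' k ->
        v k + zint mu D w K K'
          (fun l l' => rho n x1 xm k * Omega k l' * sigma n x1 xm l' * v l) = 0) ->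
     forall k, admissible D K' k -> v k = 0)
  (* U_n is well defined *)
  (HUint : forall n x1 xm i j, zintegrable mu D w K K' (U_integrand u n i j x1 xm))
  (* tacit regularity: u is differentiable in x_1, x_{-1}, and the integrals
     may be differentiated under the integral sign *)
  (Hdu : forall n x1 xm k i, admissible D K' k ->
     cderivable (fun y => u n y xm k i) x1 /\ cderivable (fun y => u n x1 y k i) xm)
  (Hdeq : forall n k i, admissible D K' k ->
     diff_under1 mu D w K K' (eq_integrand u n k i) /\
     diff_underm mu D w K K' (eq_integrand u n k i))
  (HdU : forall n i j,
     diff_under1 mu D w K K' (U_integrand u n i j) /\
     diff_underm mu D w K K' (U_integrand u n i j))
  (* phi_n = ln(1 - U_n^(0,-1)) : a continuous logarithm *)
  (Hphi : forall n x1 xm, cexp (phi n x1 xm) = 1 - Umat mu D w K K' u n x1 xm 0 (-1))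
  (Hphic : forall n x1 xm,
     ccontinuous (fun y => phi n y xm) /\ ccontinuous (fun y => phi n x1 y)) :
  (* two-dimensional Toda equation *)
  (forall n x1 xm,
     cderivable (fun y => phi n x1 y) xm /\
     cderivable (fun y => pdm (phi n) y xm) x1 /\
     pd1 (pdm (phi n)) x1 xm =
       cexp (phi n x1 xm - phi (n - 1) x1 xm) - cexp (phi (n + 1) x1 xm - phi n x1 xm))
  /\
  (* linear problem for the wave function phi_n = [u_n(k)]^(0) *)
  (forall n x1 xm k, admissible D K' k ->
     cderivable (fun y => phi n y xm) x1 /\
     pd1 (fun a b => u n a b k 0) x1 xm =
       pd1 (phi n) x1 xm * u n x1 xm k 0 + u (n + 1) x1 xm k 0 /\
     pdm (fun a b => u n a b k 0) x1 xm =
       cexp (phi n x1 xm - phi (n - 1) x1 xm) * u (n - 1) x1 xm k 0).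
Proof.
split.
- exact: (toda_part mD HD Hint Hsol Huniq HUint Hdu Hdeq HdU Hphi Hphic).
- exact: (linear_part mD HD Hint Hsol Huniq HUint Hdu Hdeq HdU Hphi Hphic).
Qed.
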